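(* Let $p\in(1,\infty)$ and let $X$ be an asymptotically $p$-uniformly smooth Banach space. There exists $c>0$ such that for all $x,y\in X$, all $\delta>0$ and every weakly null sequence $(x_n)$ in $B_X$, there is $n_0\in\mathbb N$ such that for all $n>n_0$, $u+\delta^{1/p}\|v\|x_n\in\mathrm{Mid}(x,y,c\delta)$, where $u=\frac12(x+y)$ and $v=\frac12(x-y)$.
   Context: $X$ is asymptotically $p$-uniformly smooth if $\overline\rho_X(t)\le Ct^p$ for $t\in[0,1]$ and some $C>0$, where $\overline{\rho}_X(t)=\sup_{x\in\partial B_X}\inf_{\dim(X/E)<\infty}\sup_{h\in\partial B_E}\|x+th\|-1$. For $x,y\in X$ and $\delta>0$, $\mathrm{Mid}(x,y,\delta)=\{z\in X:\max\{\|x-z\|,\|y-z\|\}\le\frac12(1+\delta)\|x-y\|\}$. *)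

(* Defs.v *)
From Stdlib Require Import Reals Lra List Classical ClassicalEpsilon.
Open Scope R_scope.

Record NormedSpace := {
  vec :> Type;
  vzero : vec;
  vadd : vec -> vec -> vec;
  vopp : vec -> vec;
  vscal : R -> vec -> vec;
  vnorm : vec -> R;
  vadd_assoc : forall x y z, vadd x (vadd y z) = vadd (vadd x y) z;
  vadd_comm : forall x y, vadd x y = vadd y x;
  vadd_0 : forall x, vadd x vzero = x;
  vadd_opp : forall x, vadd x (vopp x) = vzero;
  vscal_1 : forall x, vscal 1 x = x;
  vscal_assoc : forall a b x, vscal a (vscal b x) = vscal (a * b) x;
  vscal_distr_v : forall a x y, vscal a (vadd x y) = vadd (vscal a x) (vscal a y);
  vscal_distr_r : forall a b x, vscal (a + b) x = vadd (vscal a x) (vscal b x);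
  vnorm_eq0 : forall x, vnorm x = 0 -> x = vzero;
  vnorm_scal : forall a x, vnorm (vscal a x) = Rabs a * vnorm x;
  vnorm_triangle : forall x y, vnorm (vadd x y) <= vnorm x + vnorm y
}.

Arguments vzero {_}.
Arguments vadd {_}.
Arguments vopp {_}.
Arguments vscal {_}.
Arguments vnorm {_}.

Definition vsub {X : NormedSpace} (x y : X) : X := vadd x (vopp y).

Definition complete (X : NormedSpace) : Prop :=
  forall s : nat -> X,
    (forall eps, eps > 0 -> exists N, forall m n, (m >= N)%nat -> (n >= N)%nat ->
        vnorm (vsub (s m) (s n)) < eps) ->
    exists l : X, forall eps, eps > 0 -> exists N, forall n, (n >= N)%nat ->
        vnorm (vsub (s n) l) < eps.

Definition subspace {X : NormedSpace} (E : X -> Prop) : Prop :=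
  E vzero /\ (forall x y, E x -> E y -> E (vadd x y)) /\
  (forall a x, E x -> E (vscal a x)).

Fixpoint lincomb {X : NormedSpace} (cs : list R) (es : list X) : X :=
  match cs, es with
  | c :: cs', e :: es' => vadd (vscal c e) (lincomb cs' es')
  | _, _ => vzero
  end.

Definition finite_codim {X : NormedSpace} (E : X -> Prop) : Prop :=
  subspace E /\
  exists es : list X, forall x : X, exists e cs,
      E e /\ length cs = length es /\ x = vadd e (lincomb cs es).

(* Supremum / infimum of a set of reals (classical; 0 if not nonempty and
   bounded, a convention irrelevant here). *)
Definition Rsup (S : R -> Prop) : R :=
  match excluded_middle_informative (bound S /\ exists x, S x) with
  | left H => proj1_sig (completeness S (proj1 H) (proj2 H))
  | right _ => 0
  end.

Definition Rinf (S : R -> Prop) : R := - Rsup (fun r => S (- r)).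

Definition asym_smooth_modulus (X : NormedSpace) (t : R) : R :=
  Rsup (fun r => exists x : X, vnorm x = 1 /\
    r = Rinf (fun s => exists E : X -> Prop, finite_codim E /\
      s = Rsup (fun q => exists h : X, E h /\ vnorm h = 1 /\
                          q = vnorm (vadd x (vscal t h)) - 1))).

Definition rpow (t p : R) : R := if Rle_dec t 0 then 0 else Rpower t p.

Definition asym_p_unif_smooth (X : NormedSpace) (p : R) : Prop :=
  exists C, C > 0 /\
    forall t, 0 <= t <= 1 -> asym_smooth_modulus X t <= C * rpow t p.

Definition bounded_linear_functional {X : NormedSpace} (f : X -> R) : Prop :=
  (forall x y, f (vadd x y) = f x + f y) /\
  (forall a x, f (vscal a x) = a * f x) /\
  (exists M, forall x, Rabs (f x) <= M * vnorm x).

Definition weakly_null {X : NormedSpace} (s : nat -> X) : Prop :=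
  forall f : X -> R, bounded_linear_functional f -> Un_cv (fun n => f (s n)) 0.

Definition in_unit_ball {X : NormedSpace} (x : X) : Prop := vnorm x <= 1.

Definition Mid {X : NormedSpace} (x y : X) (delta : R) (z : X) : Prop :=
  Rmax (vnorm (vsub x z)) (vnorm (vsub y z)) <= / 2 * (1 + delta) * vnorm (vsub x y).

(* Main.v *)
Require Import Defs.
From Stdlib Require Import Reals.
From Stdlib Require Import Lra Lia List Classical ClassicalEpsilon.
Import ListNotations.
Open Scope R_scope.

Arguments vadd_assoc {_}. Arguments vadd_comm {_}. Arguments vadd_0 {_}. Arguments vadd_opp {_}.
Arguments vscal_1 {_}. Arguments vscal_assoc {_}. Arguments vscal_distr_v {_}. Arguments vscal_distr_r {_}.
Arguments vnorm_eq0 {_}. Arguments vnorm_scal {_}. Arguments vnorm_triangle {_}.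

Lemma vadd_0l {X : NormedSpace} (x : X) : vadd vzero x = x.
Proof. rewrite vadd_comm; apply vadd_0. Qed.

Lemma videm {X : NormedSpace} (z : X) : vadd z z = z -> z = vzero.
Proof. intros H. transitivity (vadd (vadd z z) (vopp z)).
  - rewrite <- vadd_assoc, vadd_opp, vadd_0. reflexivity.
  - rewrite H, vadd_opp. reflexivity. Qed.

Lemma vscal_0 {X : NormedSpace} (x : X) : vscal 0 x = vzero.
Proof. apply videm. rewrite <- vscal_distr_r. f_equal. ring. Qed.

Lemma vscal_zero {X : NormedSpace} (a : R) : vscal a (@vzero X) = vzero.
Proof. rewrite <- (vscal_0 (@vzero X)), vscal_assoc. rewrite Rmult_0_r. reflexivity. Qed.

Lemma vopp_scal {X : NormedSpace} (x : X) : vopp x = vscal (-1) x.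
Proof.
  assert (H : vadd x (vscal (-1) x) = vzero).
  { rewrite <- (vscal_1 x) at 1. rewrite <- vscal_distr_r.
    replace (1 + -1) with 0 by ring. apply vscal_0. }
  rewrite <- (vadd_0 (vscal (-1) x)), <- (vadd_opp x), vadd_assoc,
    (vadd_comm _ x), H, vadd_0l. reflexivity.
Qed.

Lemma vadd_swap4 {X : NormedSpace} (a b c d : X) :
  vadd (vadd a b) (vadd c d) = vadd (vadd a c) (vadd b d).
Proof.
  rewrite <- !vadd_assoc. f_equal. rewrite !vadd_assoc. f_equal. apply vadd_comm.
Qed.

Inductive vt := VA (i : nat) | V0 | VAdd (a b : vt) | VOpp (a : vt) | VScal (r : R) (a : vt).

Fixpoint veval {X : NormedSpace} (env : list (vec X)) (t : vt) : vec X :=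
  match t with
  | VA i => nth i env vzero
  | V0 => vzero
  | VAdd a b => vadd (veval env a) (veval env b)
  | VOpp a => vopp (veval env a)
  | VScal r a => vscal r (veval env a)
  end.

Fixpoint unitl (i : nat) : list R := match i with O => [1] | S i => 0 :: unitl i end.
Fixpoint ladd (l1 l2 : list R) : list R :=
  match l1, l2 with
  | [], l => l
  | l, [] => l
  | a :: l1', b :: l2' => (a + b) :: ladd l1' l2'
  end.
Fixpoint nf (t : vt) : list R :=
  match t with
  | VA i => unitl i
  | V0 => []
  | VAdd a b => ladd (nf a) (nf b)
  | VOpp a => map (Rmult (-1)) (nf a)
  | VScal r a => map (Rmult r) (nf a)
  end.
Fixpoint pad (n : nat) (l : list R) : list R :=
  match n with O => [] | S n' => match l with [] => 0 :: pad n' [] | a :: l' => a :: pad n' l' end end.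

Lemma lincomb_nil {X : NormedSpace} (env : list (vec X)) : lincomb [] env = vzero.
Proof. destruct env; reflexivity. Qed.

Lemma lincomb_unitl {X : NormedSpace} (i : nat) (env : list (vec X)) :
  lincomb (unitl i) env = nth i env vzero.
Proof.
  revert env; induction i; intros [|e env]; simpl; auto.
  - rewrite vadd_0, vscal_1. reflexivity.
  - rewrite IHi, vscal_0, vadd_0l. reflexivity.
Qed.

Lemma lincomb_ladd {X : NormedSpace} (l1 l2 : list R) (env : list (vec X)) :
  lincomb (ladd l1 l2) env = vadd (lincomb l1 env) (lincomb l2 env).
Proof.
  revert l2 env; induction l1 as [|a l1 IH]; intros [|b l2] [|e env]; simpl;
    try rewrite lincomb_nil; try rewrite vadd_0l; try rewrite vadd_0; auto.
  rewrite IH, vscal_distr_r. apply vadd_swap4.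
Qed.

Lemma lincomb_map {X : NormedSpace} (r : R) (l : list R) (env : list (vec X)) :
  lincomb (map (Rmult r) l) env = vscal r (lincomb l env).
Proof.
  revert env; induction l as [|a l IH]; intros [|e env]; simpl;
    try rewrite vscal_zero; auto.
  rewrite IH, vscal_distr_v, vscal_assoc. reflexivity.
Qed.

Lemma veval_nf {X : NormedSpace} (env : list (vec X)) (t : vt) :
  veval env t = lincomb (nf t) env.
Proof.
  induction t; simpl.
  - symmetry; apply lincomb_unitl.
  - reflexivity.
  - rewrite lincomb_ladd, IHt1, IHt2; reflexivity.
  - rewrite lincomb_map, IHt, vopp_scal; reflexivity.
  - rewrite lincomb_map, IHt; reflexivity.
Qed.

Lemma lincomb_pad {X : NormedSpace} (l : list R) (env : list (vec X)) :
  lincomb l env = lincomb (pad (length env) l) env.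
Proof.
  revert l; induction env as [|e env IH]; intros [|a l]; simpl; auto.
  - rewrite <- IH, lincomb_nil, vscal_0, vadd_0. reflexivity.
  - rewrite <- IH. reflexivity.
Qed.

Lemma vsolve_lemma {X : NormedSpace} (env : list (vec X)) (ta tb : vt) :
  Forall2 eq (pad (length env) (nf ta)) (pad (length env) (nf tb)) ->
  veval env ta = veval env tb.
Proof.
  intros H. rewrite !veval_nf, (lincomb_pad (nf ta)), (lincomb_pad (nf tb)).
  f_equal. induction H; congruence.
Qed.

Ltac find_idx a env :=
  lazymatch env with
  | (a :: _) => constr:(O)
  | (_ :: ?env') => let i := find_idx a env' in constr:(S i)
  end.

Ltac reify env e :=
  lazymatch e with
  | vzero => constr:(V0)
  | vadd ?a ?b => let ta := reify env a in let tb := reify env b in constr:(VAdd ta tb)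
  | vsub ?a ?b => let ta := reify env a in let tb := reify env b in constr:(VAdd ta (VOpp tb))
  | vopp ?a => let ta := reify env a in constr:(VOpp ta)
  | vscal ?r ?a => let ta := reify env a in constr:(VScal r ta)
  | _ => let i := find_idx e env in constr:(VA i)
  end.

Ltac vsolve env :=
  lazymatch goal with
  | |- ?A = ?B =>
    let ta := reify env A in let tb := reify env B in
    change (veval env ta = veval env tb);
    apply vsolve_lemma; simpl;
    repeat apply Forall2_cons; try apply Forall2_nil; try solve [ring | field]
  end.

Lemma test {X : NormedSpace} (x y z : X) (a : R) :
  vsub (vadd x (vscal a y)) (vadd z x) = vadd (vscal (a*2) (vscal (/2) y)) (vopp z).
Proof. vsolve [x; y; z]. Qed.


Lemma Rabs_m1 : Rabs (-1) = 1.
Proof. unfold Rabs; destruct Rcase_abs; lra. Qed.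

Lemma norm0 {X : NormedSpace} : vnorm (@vzero X) = 0.
Proof. rewrite <- (vscal_0 (@vzero X)), vnorm_scal, Rabs_R0. ring. Qed.

Lemma norm_nonneg {X : NormedSpace} (x : X) : 0 <= vnorm x.
Proof.
  assert (H : (@vzero X) = vadd x (vscal (-1) x)) by (vsolve [x]).
  pose proof (vnorm_triangle x (vscal (-1) x)). rewrite <- H, norm0, vnorm_scal in H0.
  rewrite Rabs_m1 in H0. lra.
Qed.

Lemma norm_sym {X : NormedSpace} (a b : X) : vnorm (vsub a b) = vnorm (vsub b a).
Proof.
  replace (vsub b a) with (vscal (-1) (vsub a b)) by (vsolve [a; b]).
  rewrite vnorm_scal, Rabs_m1. ring.
Qed.

Lemma norm_tri3 {X : NormedSpace} (a b c : X) :
  vnorm (vsub a c) <= vnorm (vsub a b) + vnorm (vsub b c).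
Proof.
  replace (vsub a c) with (vadd (vsub a b) (vsub b c)) by (vsolve [a; b; c]).
  apply vnorm_triangle.
Qed.

Lemma norm_sub_le {X : NormedSpace} (a b : X) : vnorm (vsub a b) <= vnorm a + vnorm b.
Proof.
  replace (vsub a b) with (vadd a (vscal (-1) b)) by (vsolve [a; b]).
  eapply Rle_trans; [apply vnorm_triangle|]. rewrite vnorm_scal, Rabs_m1. lra.
Qed.

Lemma norm_le_sub {X : NormedSpace} (a b : X) : vnorm a <= vnorm b + vnorm (vsub a b).
Proof.
  replace a with (vadd b (vsub a b)) at 1 by (vsolve [a; b]).
  apply vnorm_triangle.
Qed.

Lemma norm_sub0 {X : NormedSpace} (a : X) : vsub a vzero = a.
Proof. vsolve [a]. Qed.

Lemma norm_scal_sub {X : NormedSpace} (r : R) (a b : X) :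
  vnorm (vsub (vscal r a) (vscal r b)) = Rabs r * vnorm (vsub a b).
Proof.
  replace (vsub (vscal r a) (vscal r b)) with (vscal r (vsub a b)) by (vsolve [a; b]).
  apply vnorm_scal.
Qed.

Lemma Rsup_lub (S : R -> Prop) : bound S -> (exists x, S x) -> is_lub S (Rsup S).
Proof.
  intros Hb Hn. unfold Rsup. destruct excluded_middle_informative as [H|H].
  - destruct (completeness S (proj1 H) (proj2 H)) as [m Hm]; simpl; exact Hm.
  - exfalso; tauto.
Qed.

Lemma Rsup_le (S : R -> Prop) (M : R) : 0 <= M -> (forall r, S r -> r <= M) -> Rsup S <= M.
Proof.
  intros HM H. unfold Rsup. destruct excluded_middle_informative as [H'|H'].
  - destruct (completeness S (proj1 H') (proj2 H')) as [m Hm]; simpl. apply Hm. exact H.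
  - exact HM.
Qed.

Lemma Rsup_ge (S : R -> Prop) (r : R) : bound S -> S r -> r <= Rsup S.
Proof. intros Hb Hr. apply (Rsup_lub S Hb (ex_intro _ r Hr)). exact Hr. Qed.

Lemma Rinf_le (S : R -> Prop) (s M : R) : S s -> s <= M -> 0 <= M -> Rinf S <= M.
Proof.
  intros Hs HsM HM. unfold Rinf, Rsup. destruct excluded_middle_informative as [H|H].
  - destruct (completeness _ (proj1 H) (proj2 H)) as [m Hm]; simpl.
    assert (-s <= m) by (apply Hm; rewrite Ropp_involutive; exact Hs). lra.
  - lra.
Qed.

Lemma Rinf_approx (S : R -> Prop) (M eps : R) : (exists s, S s) -> Rinf S <= M -> eps > 0 ->
  exists s, S s /\ s < M + eps.
Proof.
  intros [s0 Hs0] HI He. apply NNPP; intros Hno.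
  assert (Hall : forall s, S s -> M + eps <= s).
  { intros s Hs. apply Rnot_lt_le. intros Hlt. apply Hno. exists s; auto. }
  unfold Rinf in HI.
  assert (Hb : bound (fun r => S (- r))).
  { exists (-(M+eps)). intros r Hr. apply Hall in Hr. lra. }
  assert (Hne : exists r, S (- r)) by (exists (-s0); rewrite Ropp_involutive; exact Hs0).
  assert (Hl := Rsup_lub _ Hb Hne).
  assert (Rsup (fun r => S (- r)) <= -(M+eps)).
  { apply Hl. intros r Hr. apply Hall in Hr. lra. }
  lra.
Qed.

Lemma abs_le_iff (x a : R) : Rabs x <= a <-> -a <= x <= a.
Proof. unfold Rabs; destruct Rcase_abs; split; intros; lra. Qed.

Lemma small_zero (r K : R) : 0 <= K -> (forall eta, eta > 0 -> Rabs r <= K * eta) -> r = 0.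
Proof.
  intros HK H. destruct (Req_dec r 0) as [|Hr]; auto. exfalso.
  assert (Ha : Rabs r > 0) by (apply Rabs_pos_lt; auto).
  specialize (H (Rabs r / (K + 1)) ltac:(apply Rdiv_lt_0_compat; lra)).
  assert (K * (Rabs r / (K + 1)) < Rabs r).
  { unfold Rdiv. rewrite <- Rmult_assoc. apply (Rmult_lt_reg_r (K+1)); [lra|].
    rewrite Rmult_assoc, Rinv_l by lra. nra. }
  lra.
Qed.


Lemma functional_exists {X : NormedSpace} (G : X -> Prop) (e1 : X) (d : R) :
  subspace G -> d > 0 -> (forall g, G g -> d <= vnorm (vsub e1 g)) ->
  (forall x eta, eta > 0 -> exists z, (exists c y, G y /\ z = vadd (vscal c e1) y) /\
       vnorm (vsub x z) < eta) ->
  exists (phi : X -> R) (L : R), L > 0 /\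
    (forall x y, phi (vadd x y) = phi x + phi y) /\
    (forall a x, phi (vscal a x) = a * phi x) /\
    (forall x, Rabs (phi x) <= L * vnorm x) /\
    phi e1 = 1 /\ (forall g, G g -> phi g = 0).
Proof.
  intros [G0 [Gadd Gscal]] Hd Hdist Hdense.
  set (L := / d).
  assert (HL : L > 0) by (apply Rinv_0_lt_compat; lra).
  assert (lower : forall b k, G k -> Rabs b * d <= vnorm (vadd (vscal b e1) k)).
  { intros b k Hk. destruct (Req_dec b 0) as [->|Hb].
    - rewrite Rabs_R0, Rmult_0_l. apply norm_nonneg.
    - replace (vadd (vscal b e1) k) with (vscal b (vsub e1 (vscal (- / b) k)))
        by (vsolve [e1; k]; field; auto).
      rewrite vnorm_scal. apply Rmult_le_compat_l; [apply Rabs_pos|].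
      apply Hdist, Gscal, Hk. }
  assert (upper : forall b k, G k -> b <= L * vnorm (vadd (vscal b e1) k)).
  { intros b k Hk. specialize (lower b k Hk).
    apply Rle_trans with (Rabs b); [apply RRle_abs|].
    apply (Rmult_le_reg_r d); [lra|].
    replace (L * vnorm (vadd (vscal b e1) k) * d) with (vnorm (vadd (vscal b e1) k))
      by (unfold L; field; lra). lra. }
  set (A := fun x r => exists a g, G g /\ r = a - L * vnorm (vsub x (vadd (vscal a e1) g))).
  assert (Abound : forall x r, A x r -> r <= L * vnorm x).
  { intros x r [a [g [Hg ->]]]. specialize (upper a g Hg).
    pose proof (norm_le_sub (vadd (vscal a e1) g) x).
    rewrite (norm_sym _ x) in H. nra. }
  assert (Ane : forall x, exists r, A x r).
  { intros x. exists (0 - L * vnorm (vsub x (vadd (vscal 0 e1) vzero))). exists 0, vzero. auto. }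
  set (F := fun x => Rsup (A x)).
  assert (Flub : forall x, is_lub (A x) (F x)).
  { intros x. apply Rsup_lub; [exists (L * vnorm x); intros r Hr; apply Abound; auto | apply Ane]. }
  assert (FH : forall a g, G g -> F (vadd (vscal a e1) g) = a).
  { intros a g Hg. apply Rle_antisym.
    - apply (Flub _). intros r [a' [g' [Hg' ->]]].
      pose proof (upper (a' - a) (vsub g' g)) as U.
      replace (vadd (vscal (a' - a) e1) (vsub g' g)) with
        (vsub (vadd (vscal a' e1) g') (vadd (vscal a e1) g)) in U by (vsolve [e1; g; g']).
      rewrite norm_sym in U. assert (G (vsub g' g)).
      { unfold vsub. rewrite vopp_scal. auto. }
      specialize (U H). lra.
    - apply (Flub _). exists a, g. split; auto.
      replace (vsub (vadd (vscal a e1) g) (vadd (vscal a e1) g)) with (@vzero X) by (vsolve [e1; g]).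
      rewrite norm0. ring. }
  assert (Flip : forall x y, F x <= F y + L * vnorm (vsub x y)).
  { intros x y. apply (Flub x). intros r [a [g [Hg ->]]].
    assert (a - L * vnorm (vsub y (vadd (vscal a e1) g)) <= F y).
    { apply (Flub y). exists a, g; auto. }
    pose proof (norm_tri3 y x (vadd (vscal a e1) g)). rewrite (norm_sym y x) in H0. nra. }
  assert (FlipA : forall x y, Rabs (F x - F y) <= L * vnorm (vsub x y)).
  { intros x y. apply abs_le_iff. pose proof (Flip x y); pose proof (Flip y x).
    rewrite norm_sym in H0. lra. }
  assert (F0 : F vzero = 0).
  { replace (@vzero X) with (vadd (vscal 0 e1) (@vzero X)) at 1 by (vsolve [e1]). apply FH; auto. }
  exists F, L. split; [auto|]. split; [|split; [|split; [|split]]].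
  - intros x y. apply Rminus_diag_uniq. apply (small_zero _ (4 * L)); [lra|].
    intros eta Heta.
    destruct (Hdense x eta Heta) as [h1 [[a1 [g1 [Hg1 ->]]] Hx]].
    destruct (Hdense y eta Heta) as [h2 [[a2 [g2 [Hg2 ->]]] Hy]].
    pose proof (FlipA (vadd x y) (vadd (vscal (a1 + a2) e1) (vadd g1 g2))) as P1.
    pose proof (FlipA x (vadd (vscal a1 e1) g1)) as P2.
    pose proof (FlipA y (vadd (vscal a2 e1) g2)) as P3.
    rewrite FH in P1 by auto. rewrite FH in P2 by auto. rewrite FH in P3 by auto.
    pose proof (norm_tri3 (vadd x y) (vadd (vadd (vscal a1 e1) g1) y)
        (vadd (vscal (a1 + a2) e1) (vadd g1 g2))) as T.
    replace (vsub (vadd x y) (vadd (vadd (vscal a1 e1) g1) y)) with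
      (vsub x (vadd (vscal a1 e1) g1)) in T by (vsolve [x; y; e1; g1]).
    replace (vsub (vadd (vadd (vscal a1 e1) g1) y) (vadd (vscal (a1 + a2) e1) (vadd g1 g2))) with
      (vsub y (vadd (vscal a2 e1) g2)) in T by (vsolve [x; y; e1; g1; g2]).
    assert (L * vnorm (vsub (vadd x y) (vadd (vscal (a1 + a2) e1) (vadd g1 g2))) <= L * (2 * eta))
      by (apply Rmult_le_compat_l; lra).
    assert (L * vnorm (vsub x (vadd (vscal a1 e1) g1)) <= L * eta) by (apply Rmult_le_compat_l; lra).
    assert (L * vnorm (vsub y (vadd (vscal a2 e1) g2)) <= L * eta) by (apply Rmult_le_compat_l; lra).
    apply abs_le_iff in P1; apply abs_le_iff in P2; apply abs_le_iff in P3.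
    apply abs_le_iff. lra.
  - intros r x. apply Rminus_diag_uniq. apply (small_zero _ (2 * L * Rabs r));
      [pose proof (Rabs_pos r); nra|].
    intros eta Heta.
    destruct (Hdense x eta Heta) as [h1 [[a1 [g1 [Hg1 ->]]] Hx]].
    pose proof (FlipA (vscal r x) (vadd (vscal (r * a1) e1) (vscal r g1))) as P1.
    pose proof (FlipA x (vadd (vscal a1 e1) g1)) as P2.
    rewrite FH in P1 by auto. rewrite FH in P2 by auto.
    replace (vsub (vscal r x) (vadd (vscal (r * a1) e1) (vscal r g1))) with
      (vscal r (vsub x (vadd (vscal a1 e1) g1))) in P1 by (vsolve [x; e1; g1]).
    rewrite vnorm_scal in P1.
    replace (F (vscal r x) - r * F x) with ((F (vscal r x) - r * a1) - r * (F x - a1)) by ring.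
    eapply Rle_trans; [apply Rabs_triang|]. rewrite Rabs_Ropp, Rabs_mult.
    pose proof (Rabs_pos r). pose proof (norm_nonneg (vsub x (vadd (vscal a1 e1) g1))).
    assert (Rabs r * Rabs (F x - a1) <= Rabs r * (L * eta)).
    { apply Rmult_le_compat_l; auto. apply Rle_trans with (L * vnorm (vsub x (vadd (vscal a1 e1) g1)));
      [exact P2 | apply Rmult_le_compat_l; lra]. }
    assert (L * (Rabs r * vnorm (vsub x (vadd (vscal a1 e1) g1))) <= L * (Rabs r * eta)).
    { apply Rmult_le_compat_l; [lra|]. apply Rmult_le_compat_l; lra. }
    lra.
  - intros x. pose proof (FlipA x vzero). rewrite F0, Rminus_0_r, norm_sub0 in H. exact H.
  - replace e1 with (vadd (vscal 1 e1) (@vzero X)) at 1 by (vsolve [e1]). apply FH; auto.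
  - intros g Hg. replace g with (vadd (vscal 0 e1) g) at 1 by (vsolve [e1; g]). apply FH; auto.
Qed.


Fixpoint sp {X : NormedSpace} (E : X -> Prop) (l : list (vec X)) : X -> Prop :=
  match l with
  | [] => E
  | a :: l' => fun x => exists c y, sp E l' y /\ x = vadd (vscal c a) y
  end.

Lemma sp_subspace {X : NormedSpace} (E : X -> Prop) l : subspace E -> subspace (sp E l).
Proof.
  intros HE. induction l as [|a l IH]; simpl; auto.
  destruct IH as [H0 [Hadd Hscal]]. split; [|split].
  - exists 0, vzero. split; auto. vsolve [a].
  - intros x y [c [u [Hu ->]]] [c' [u' [Hu' ->]]]. exists (c + c'), (vadd u u').
    split; auto. vsolve [a; u; u'].
  - intros r x [c [u [Hu ->]]]. exists (r * c), (vscal r u). split; auto. vsolve [a; u].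
Qed.

Lemma sp_incl {X : NormedSpace} (E : X -> Prop) l x : E x -> sp E l x.
Proof. intros H. induction l as [|a l IH]; simpl; auto. exists 0, x. split; auto. vsolve [a; x]. Qed.

Lemma sp_mono {X : NormedSpace} (E F : X -> Prop) l x : (forall z, E z -> F z) -> sp E l x -> sp F l x.
Proof.
  intros HEF. revert x; induction l as [|a l IH]; simpl; auto.
  intros x [c [y [Hy ->]]]. exists c, y; auto.
Qed.

Lemma sp_shift {X : NormedSpace} (F : X -> Prop) l y z : subspace F -> sp F l y -> F z -> sp F l (vadd z y).
Proof.
  intros [F0 [Fadd Fscal]]. revert y; induction l as [|a l IH]; simpl; intros y Hy Hz.
  - apply Fadd; auto.
  - destruct Hy as [c [u [Hu ->]]]. exists c, (vadd z u). split; auto. vsolve [a; u; z].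
Qed.

Lemma lincomb_sp {X : NormedSpace} (E : X -> Prop) es cs e : subspace E -> E e ->
  sp E es (vadd e (lincomb cs es)).
Proof.
  intros HE. revert cs e; induction es as [|a es IH]; intros cs e He; simpl.
  - destruct cs; simpl; rewrite vadd_0; auto.
  - destruct cs as [|c cs].
    + exists 0, (vadd e vzero). split.
      * pose proof (IH [] e He). rewrite lincomb_nil in H. exact H.
      * simpl. vsolve [a; e].
    + exists c, (vadd e (lincomb cs es)). split; auto. simpl. vsolve [a; e; lincomb cs es].
Qed.

Definition near {X : NormedSpace} (S : X -> Prop) (x : X) (eta : R) : Prop :=
  exists e, S e /\ vnorm (vsub x e) < eta.

Lemma claim {X : NormedSpace} (l : list (vec X)) : forall (E : X -> Prop), subspace E ->
  (forall x eta, eta > 0 -> near (sp E l) x eta) ->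
  forall xs : nat -> X, weakly_null xs ->
  forall eps, eps > 0 -> exists N, forall n, (n >= N)%nat -> near E (xs n) eps.
Proof.
  induction l as [|e1 l IH]; intros E HE Hdense xs Hwn eps Heps.
  - exists O. intros n _. apply Hdense; auto.
  - set (G := sp E l). assert (HG : subspace G) by (apply sp_subspace; auto).
    destruct (classic (forall eta, eta > 0 -> near G e1 eta)) as [Hcl|Hncl].
    +
      apply (IH E HE); auto. intros x eta Heta.
      destruct (Hdense x (eta / 2) ltac:(lra)) as [z [[c [y [Hy ->]]] Hz]].
      assert (Hq : eta / (2 * (Rabs c + 1)) > 0).
      { apply Rdiv_lt_0_compat; [lra|]. pose proof (Rabs_pos c); lra. }
      destruct (Hcl _ Hq) as [g [Hg Hgn]].
      destruct HG as [G0 [Gadd Gscal]].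
      exists (vadd (vscal c g) y). split; [apply Gadd; auto|].
      pose proof (norm_tri3 x (vadd (vscal c e1) y) (vadd (vscal c g) y)).
      replace (vsub (vadd (vscal c e1) y) (vadd (vscal c g) y)) with (vscal c (vsub e1 g)) in H
        by (vsolve [e1; y; g]).
      rewrite vnorm_scal in H.
      assert (Rabs c * vnorm (vsub e1 g) <= (Rabs c + 1) * (eta / (2 * (Rabs c + 1)))).
      { pose proof (Rabs_pos c); pose proof (norm_nonneg (vsub e1 g)).
        apply Rmult_le_compat; lra. }
      replace ((Rabs c + 1) * (eta / (2 * (Rabs c + 1)))) with (eta / 2) in H0
        by (field; pose proof (Rabs_pos c); lra).
      lra.
    +
      apply not_all_ex_not in Hncl. destruct Hncl as [d Hd].
      apply imply_to_and in Hd. destruct Hd as [Hd Hnn].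
      assert (Hdist : forall g, G g -> d <= vnorm (vsub e1 g)).
      { intros g Hg. apply Rnot_lt_le. intros Hlt. apply Hnn. exists g; auto. }
      destruct (functional_exists G e1 d HG Hd Hdist) as [phi [L [HL [Padd [Pscal [Pb [P1 P0]]]]]]].
      { intros x eta Heta. destruct (Hdense x eta Heta) as [z [Hz Hzn]]. exists z; auto. }
      set (F := fun z => exists e c, E e /\ z = vadd e (vscal c e1)).
      assert (HF : subspace F).
      { destruct HE as [E0 [Eadd Escal]]. split; [|split].
        - exists vzero, 0. split; auto. vsolve [e1].
        - intros x y [e [c [He ->]]] [e' [c' [He' ->]]]. exists (vadd e e'), (c + c').
          split; auto. vsolve [e; e'; e1].
        - intros a x [e [c [He ->]]]. exists (vscal a e), (a * c). split; auto. vsolve [e; e1]. }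
      assert (HdF : forall x eta, eta > 0 -> near (sp F l) x eta).
      { intros x eta Heta. destruct (Hdense x eta Heta) as [z [[c [y [Hy ->]]] Hz]].
        exists (vadd (vscal c e1) y). split; auto. apply sp_shift; auto.
        - apply (sp_mono E); auto. intros w Hw. exists w, 0. split; auto. vsolve [w; e1].
        - exists vzero, c. split; [apply HE|]. vsolve [e1]. }
      set (K := vnorm e1 + 1).
      assert (HK : K > 0) by (unfold K; pose proof (norm_nonneg e1); lra).
      set (eps' := eps / (3 * (1 + L * K))).
      assert (Heps' : eps' > 0) by (unfold eps'; apply Rdiv_lt_0_compat; nra).
      set (beta := eps / (3 * K)).
      assert (Hbeta : beta > 0) by (unfold beta; apply Rdiv_lt_0_compat; nra).
      destruct (IH F HF HdF xs Hwn eps' Heps') as [N1 HN1].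
      assert (Hbl : bounded_linear_functional phi).
      { split; [|split]; auto. exists L; auto. }
      destruct (Hwn phi Hbl beta Hbeta) as [N2 HN2].
      exists (max N1 N2). intros n Hn.
      destruct (HN1 n ltac:(lia)) as [z [[e [c [He ->]]] Hz]].
      specialize (HN2 n ltac:(lia)). unfold R_dist in HN2. rewrite Rminus_0_r in HN2.
      assert (Hphi : phi (xs n) = phi (vsub (xs n) (vadd e (vscal c e1))) + c).
      { replace (xs n) with (vadd (vsub (xs n) (vadd e (vscal c e1))) (vadd e (vscal c e1))) at 1
          by (vsolve [xs n; e; e1]).
        rewrite !Padd, Pscal, P1, (P0 e) by (apply sp_incl; auto). ring. }
      pose proof (Pb (vsub (xs n) (vadd e (vscal c e1)))) as Pr.
      exists e. split; auto.
      pose proof (norm_tri3 (xs n) (vadd e (vscal c e1)) e).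
      replace (vsub (vadd e (vscal c e1)) e) with (vscal c e1) in H by (vsolve [e; e1]).
      rewrite vnorm_scal in H.
      set (r := vnorm (vsub (xs n) (vadd e (vscal c e1)))) in *.
      assert (Hc : Rabs c <= beta + L * eps').
      { assert (L * r <= L * eps') by (apply Rmult_le_compat_l; lra).
        apply abs_le_iff in Pr. apply Rabs_def2 in HN2. apply abs_le_iff. lra. }
      assert (Rabs c * vnorm e1 <= (beta + L * eps') * K).
      { apply Rmult_le_compat; [apply Rabs_pos|apply norm_nonneg|auto|unfold K; lra]. }
      assert (Hfin : eps' + (beta + L * eps') * K < eps).
      { unfold eps', beta. 
        replace (eps / (3 * (1 + L * K)) + (eps / (3 * K) + L * (eps / (3 * (1 + L * K)))) * K)
          with (2 * eps / 3) by (field; split; nra). lra. }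
      lra.
Qed.


Lemma core {X : NormedSpace} (p C : R) :
  (forall t, 0 <= t <= 1 -> asym_smooth_modulus X t <= C * rpow t p) -> C > 0 ->
  forall w : X, vnorm w = 1 -> forall t, 0 < t -> t <= 1 ->
  forall xs : nat -> X, (forall n, vnorm (xs n) <= 1) -> weakly_null xs ->
  exists N, forall n, (n >= N)%nat -> vnorm (vsub w (vscal t (xs n))) <= 1 + (C + 3) * Rpower t p.
Proof.
  intros Hmod HC w Hw t Ht0 Ht1 xs Hxs Hwn.
  set (tp := Rpower t p).
  assert (Htp : tp > 0) by (unfold tp, Rpower; apply exp_pos).
  assert (Hrp : rpow t p = tp) by (unfold rpow; destruct Rle_dec; [lra|reflexivity]).
  assert (Qb : forall (x : X) (E : X -> Prop) q, vnorm x = 1 ->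
     (exists h, E h /\ vnorm h = 1 /\ q = vnorm (vadd x (vscal t h)) - 1) -> q <= t).
  { intros x E q Hx [h [_ [Hh ->]]]. pose proof (vnorm_triangle x (vscal t h)).
    rewrite vnorm_scal, Hh, Rabs_pos_eq in H by lra. lra. }
  assert (Hfull : finite_codim (fun _ : X => True)).
  { split; [split; [|split]; auto|]. exists []. intros x. exists x, []. split; auto. split; auto.
    simpl. rewrite vadd_0. reflexivity. }
  assert (Hinf : forall x : X, vnorm x = 1 ->
    Rinf (fun s => exists E : X -> Prop, finite_codim E /\
      s = Rsup (fun q => exists h : X, E h /\ vnorm h = 1 /\
                          q = vnorm (vadd x (vscal t h)) - 1)) <= t).
  { intros x Hx. eapply Rinf_le; [exists (fun _ => True); split; [exact Hfull|reflexivity]| |lra].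
    apply Rsup_le; [lra|]. intros q Hq. apply (Qb x (fun _ => True)); auto. }
  assert (H1 : Rinf (fun s => exists E : X -> Prop, finite_codim E /\
      s = Rsup (fun q => exists h : X, E h /\ vnorm h = 1 /\
                          q = vnorm (vadd w (vscal t h)) - 1)) <= C * tp).
  { rewrite <- Hrp. eapply Rle_trans; [|apply Hmod; lra].
    unfold asym_smooth_modulus. apply Rsup_ge.
    - exists t. intros r [x [Hx ->]]. apply Hinf; auto.
    - exists w. split; auto. }
  destruct (Rinf_approx _ _ tp (ex_intro _ _ (ex_intro _ _ (conj Hfull eq_refl))) H1 Htp)
    as [s [[E [HfE ->]] Hs]].
  destruct HfE as [HE [es Hes]].
  assert (B : forall k, E k -> vnorm k = 1 -> vnorm (vadd w (vscal t k)) <= 1 + (C + 1) * tp).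
  { intros k Hk Hk1.
    assert (vnorm (vadd w (vscal t k)) - 1 <= Rsup (fun q => exists h : X, E h /\ vnorm h = 1 /\
                          q = vnorm (vadd w (vscal t h)) - 1)).
    { apply Rsup_ge; [exists t; intros q Hq; apply (Qb w E); auto | exists k; auto]. }
    lra. }
  destruct HE as [E0 [Eadd Escal]].
  assert (Conv : forall k, E k -> vnorm k = 1 -> forall s, 0 <= s <= t ->
     vnorm (vadd w (vscal s k)) <= 1 + (C + 1) * tp).
  { intros k Hk Hk1 s Hs0. set (al := (1 + s / t) / 2).
    assert (Hal : 0 <= al <= 1).
    { unfold al. rename Hs0 into Hs2. assert (0 <= s / t <= 1).
      { split; [unfold Rdiv; apply Rmult_le_pos; [lra| left; apply Rinv_0_lt_compat; lra]|]. apply (Rmult_le_reg_r t); [lra|].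
        unfold Rdiv; rewrite Rmult_assoc, Rinv_l; lra. }
      lra. }
    replace (vadd w (vscal s k)) with
      (vadd (vscal al (vadd w (vscal t k))) (vscal (1 - al) (vadd w (vscal t (vscal (-1) k)))))
      by (vsolve [w; k]; unfold al; field; lra).
    eapply Rle_trans; [apply vnorm_triangle|]. rewrite !vnorm_scal.
    rewrite (Rabs_pos_eq al), (Rabs_pos_eq (1 - al)) by lra.
    pose proof (B k Hk Hk1). pose proof (B (vscal (-1) k) (Escal _ _ Hk)).
    rewrite vnorm_scal, Rabs_m1, Hk1 in H0. specialize (H0 ltac:(ring)).
    assert (al * vnorm (vadd w (vscal t k)) <= al * (1 + (C + 1) * tp))
      by (apply Rmult_le_compat_l; lra).
    assert ((1 - al) * vnorm (vadd w (vscal t (vscal (-1) k))) <= (1 - al) * (1 + (C + 1) * tp))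
      by (apply Rmult_le_compat_l; lra).
    lra. }
  assert (Ball : forall h, E h -> vnorm h <= 1 -> vnorm (vsub w (vscal t h)) <= 1 + (C + 1) * tp).
  { intros h Hh Hh1. destruct (Req_dec (vnorm h) 0) as [H0|H0].
    - apply vnorm_eq0 in H0. subst h.
      replace (vsub w (vscal t vzero)) with w by (vsolve [w]). nra.
    - set (la := vnorm h). pose proof (norm_nonneg h).
      replace (vsub w (vscal t h)) with (vadd w (vscal (t * la) (vscal (- / la) h)))
        by (vsolve [w; h]; unfold la; field; auto).
      apply Conv; [apply Escal; auto| |].
      + rewrite vnorm_scal, Rabs_Ropp, Rabs_pos_eq; [unfold la; field; auto|].
        left; apply Rinv_0_lt_compat; unfold la; lra.
      + split; [apply Rmult_le_pos; unfold la; lra|]. unfold la. nra. }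
  assert (Hden : forall x eta, eta > 0 -> near (sp E es) x eta).
  { intros x eta Heta. destruct (Hes x) as [e [cs [He [_ Hx]]]].
    exists x. split.
    - rewrite Hx. apply lincomb_sp; auto. split; auto.
    - replace (vsub x x) with (@vzero X) by (vsolve [x]). rewrite norm0; lra. }
  destruct (claim es E ltac:(split; auto) Hden xs Hwn tp Htp) as [N HN].
  exists N. intros n Hn. destruct (HN n Hn) as [e [He Hen]].
  pose proof (norm_scal_sub t e (xs n)) as Hsc. rewrite Rabs_pos_eq in Hsc by lra.
  rewrite norm_sym in Hen.
  destruct (Rle_dec (vnorm e) 1) as [Hle|Hgt].
  - pose proof (norm_tri3 w (vscal t e) (vscal t (xs n))). pose proof (Ball e He Hle).
    assert (t * vnorm (vsub e (xs n)) <= 1 * tp) by (apply Rmult_le_compat; try lra; apply norm_nonneg).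
    lra.
  - set (la := vnorm e) in *.
    assert (Hla : la > 1) by lra.
    set (e' := vscal (/ la) e).
    assert (He' : vnorm e' = 1) by (unfold e'; rewrite vnorm_scal, Rabs_pos_eq; 
      [fold la; field; lra | left; apply Rinv_0_lt_compat; lra]).
    assert (Hee' : vnorm (vsub e' e) = la - 1).
    { unfold e'. replace (vsub (vscal (/ la) e) e) with (vscal (/ la - 1) e) by (vsolve [e]).
      rewrite vnorm_scal. fold la. rewrite Rabs_left1.
      - field; lra.
      - assert (/ la < / 1) by (apply Rinv_lt_contravar; lra). rewrite Rinv_1 in H. lra. }
    pose proof (norm_le_sub e (xs n)). fold la in H. specialize (Hxs n).
    pose proof (Ball e' ltac:(unfold e'; apply Escal; auto) ltac:(lra)).
    pose proof (norm_tri3 w (vscal t e') (vscal t (xs n))).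
    pose proof (norm_scal_sub t e' (xs n)) as Hsc'. rewrite Rabs_pos_eq in Hsc' by lra.
    pose proof (norm_tri3 e' e (xs n)).
    assert (t * vnorm (vsub e' (xs n)) <= 1 * (2 * tp)).
    { apply Rmult_le_compat; try lra; apply norm_nonneg. }
    lra.
Qed.


Theorem lemma5p1 :
  forall (p : R), 1 < p ->
  forall (X : NormedSpace), complete X -> asym_p_unif_smooth X p ->
  exists c : R, c > 0 /\
    forall (x y : X) (delta : R), delta > 0 ->
    forall xs : nat -> X, (forall n, in_unit_ball (xs n)) -> weakly_null xs ->
    exists n0 : nat, forall n : nat, (n > n0)%nat ->
      Mid x y (c * delta)
        (vadd (vscal (/ 2) (vadd x y))
              (vscal (Rpower delta (/ p) * vnorm (vscal (/ 2) (vsub x y))) (xs n))).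
Proof.
  intros p Hp X _ [C [HC Hmod]].
  exists (C + 3). split; [lra|].
  intros x y delta Hd xs Hxs Hwn.
  unfold in_unit_ball in Hxs.
  set (t := Rpower delta (/ p)).
  assert (Ht : t > 0) by (unfold t, Rpower; apply exp_pos).
  set (v := vscal (/ 2) (vsub x y)).
  set (V := vnorm v).
  assert (HV : V = / 2 * vnorm (vsub x y)).
  { unfold V, v. rewrite vnorm_scal, Rabs_pos_eq; [reflexivity|lra]. }
  assert (HV0 : 0 <= V) by (apply norm_nonneg).
  assert (Ix : forall n, vsub x (vadd (vscal (/ 2) (vadd x y)) (vscal (t * V) (xs n)))
                = vadd v (vscal (- (t * V)) (xs n))) by (intros n; unfold v; vsolve [x; y; xs n]).
  assert (Iy : forall n, vsub y (vadd (vscal (/ 2) (vadd x y)) (vscal (t * V) (xs n)))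
                = vadd (vscal (-1) v) (vscal (- (t * V)) (xs n))) by (intros n; unfold v; vsolve [x; y; xs n]).
  assert (Gen : forall n, Rmax (vnorm (vsub x (vadd (vscal (/ 2) (vadd x y)) (vscal (t * V) (xs n)))))
                   (vnorm (vsub y (vadd (vscal (/ 2) (vadd x y)) (vscal (t * V) (xs n))))) <= V * (1 + t)).
  { intros n. specialize (Hxs n). assert (t * V * vnorm (xs n) <= t * V) by (rewrite <- (Rmult_1_r (t * V)) at 2; apply Rmult_le_compat_l; [apply Rmult_le_pos; lra | auto]).
    apply Rmax_lub; [rewrite Ix | rewrite Iy]; eapply Rle_trans; try apply vnorm_triangle;
      rewrite !vnorm_scal; rewrite ?Rabs_m1, Rabs_Ropp, Rabs_pos_eq by nra; fold V; lra. }
  unfold Mid.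
  replace (/ 2 * (1 + (C + 3) * delta) * vnorm (vsub x y)) with ((1 + (C + 3) * delta) * V)
    by (rewrite HV; ring).
  destruct (Rlt_dec delta 1) as [Hd1|Hd1].
  2:{ exists O. intros n _. eapply Rle_trans; [apply Gen|].
      assert (t <= delta).
      { unfold t. rewrite <- (Rpower_1 delta) at 2 by lra. apply Rle_Rpower; [lra|].
        assert (/ p < / 1) by (apply Rinv_lt_contravar; lra). rewrite Rinv_1 in H. lra. }
      assert (delta <= (C + 3) * delta) by nra. nra. }
  destruct (Req_dec V 0) as [HV00|HVn].
  { exists O. intros n _. eapply Rle_trans; [apply Gen|]. rewrite HV00. nra. }
  assert (Ht1 : t < 1).
  { unfold t, Rpower. rewrite <- exp_0. apply exp_increasing.
    assert (ln delta < 0) by (rewrite <- ln_1; apply ln_increasing; lra).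
    assert (/ p > 0) by (apply Rinv_0_lt_compat; lra). nra. }
  assert (Htp : Rpower t p = delta).
  { unfold t. rewrite Rpower_mult. replace (/ p * p) with 1 by (field; lra). apply Rpower_1; lra. }
  assert (Hw1 : vnorm (vscal (/ V) v) = 1).
  { rewrite vnorm_scal, Rabs_pos_eq; [fold V; field; auto | left; apply Rinv_0_lt_compat; lra]. }
  assert (Hw2 : vnorm (vscal (- / V) v) = 1).
  { rewrite vnorm_scal, Rabs_Ropp, Rabs_pos_eq; [fold V; field; auto | left; apply Rinv_0_lt_compat; lra]. }
  destruct (core p C Hmod HC _ Hw1 t Ht ltac:(lra) xs Hxs Hwn) as [N1 HN1].
  destruct (core p C Hmod HC _ Hw2 t Ht ltac:(lra) xs Hxs Hwn) as [N2 HN2].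
  rewrite Htp in HN1, HN2.
  exists (max N1 N2). intros n Hn. specialize (HN1 n ltac:(lia)). specialize (HN2 n ltac:(lia)).
  apply Rmax_lub.
  - rewrite Ix. replace (vadd v (vscal (- (t * V)) (xs n))) with
      (vscal V (vsub (vscal (/ V) v) (vscal t (xs n)))) by (vsolve [v; xs n]; field; auto).
    rewrite vnorm_scal, Rabs_pos_eq by lra. rewrite Rmult_comm. apply Rmult_le_compat_r; lra.
  - rewrite Iy. replace (vadd (vscal (-1) v) (vscal (- (t * V)) (xs n))) with
      (vscal V (vsub (vscal (- / V) v) (vscal t (xs n)))) by (vsolve [v; xs n]; field; auto).
    rewrite vnorm_scal, Rabs_pos_eq by lra. rewrite Rmult_comm. apply Rmult_le_compat_r; lra.
Qed.
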